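(* There exist $p\in\mathcal P$ and $x\in N$ such that $D_{\mu(p)}(p)=\{x\}\subseteq D_{\mu(p^r)}(p^r)$ if and only if $(h,n)\notin T_2$, where $T_2=\{(h,n): h=2\}\cup\{(h,n): n\le3\}\cup\{(4,4)\}$.
   Context: Let $n,h\ge2$ be integers, $N=\{1,\dots,n\}$, $H=\{1,\dots,h\}$. $\mathcal P$ is the set of $h$-tuples $p=(p_1,\dots,p_h)$ of linear orders on $N$; $p^r$ is obtained by reversing each $p_i$; $x>_{p_i}y$ means $x\ne y$ and $p_i$ ranks $x$ above $y$. For an integer $\mu$ with $h/2<\mu\le h$, $D_\mu(p)=\{x\in N: \forall y\in N,\ |\{i: y>_{p_i}x\}|<\mu\}$, and $\mu(p)=\min\{\mu\in\mathbb N\cap(h/2,h]: D_\mu(p)\neq\varnothing\}$. *)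

(* Defs.v *)
From mathcomp Require Import all_boot.
Set Implicit Arguments. Unset Strict Implicit. Unset Printing Implicit Defensive.

(* The voter set N = {1,...,n} is modelled by 'I_n, the index set H = {1,...,h} by 'I_h.
   A linear order on 'I_n is a boolean relation r, r x y meaning
   "x is ranked at or above y". *)
Definition linear_order (n : nat) (r : rel 'I_n) : Prop :=
  [/\ reflexive r, antisymmetric r, transitive r & total r].

Definition profile (h n : nat) := 'I_h -> rel 'I_n.

Definition above (n : nat) (r : rel 'I_n) (x y : 'I_n) : bool := (x != y) && r x y.

Definition prof_rev (h n : nat) (p : profile h n) : profile h n :=
  fun i x y => p i y x.

Definition Dmu (h n : nat) (m : nat) (p : profile h n) : {set 'I_n} :=
  [set x | [forall y, #|[set i : 'I_h | above (p i) y x]| < m]].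

(* mu(p) = min { m integer, h/2 < m <= h, D_m(p) nonempty }.
   For integers, h/2 < m  <->  h./2 < m.  The candidates h./2+1, ..., h are scanned
   in increasing order; the default h is never used for linear-order profiles
   (D_h(p) contains the top of p_1). *)
Definition mu (h n : nat) (p : profile h n) : nat :=
  head h [seq m <- iota h./2.+1 (h - h./2) | Dmu m p != set0].

(* Main.v *)
Require Import Defs.
From mathcomp Require Import all_boot zify.
Set Implicit Arguments. Unset Strict Implicit. Unset Printing Implicit Defensive.

Definition C h n (p : profile h n) (y x : 'I_n) : nat := \sum_(i < h) above (p i) y x.
Definition DD n (c : 'I_n -> 'I_n -> nat) m : {set 'I_n} := [set x | [forall y, c y x < m]].
Definition MU h n (c : 'I_n -> 'I_n -> nat) :=
  head h [seq m <- iota h./2.+1 (h - h./2) | DD c m != set0].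
Definition tr n (c : 'I_n -> 'I_n -> nat) := fun y x => c x y.
Definition GoodC h n (c : 'I_n -> 'I_n -> nat) x :=
  DD c (MU h c) = [set x] /\ x \in DD (tr c) (MU h (tr c)).

Lemma card_setb h (b : 'I_h -> bool) : #|[set i | b i]| = \sum_(i < h) b i.
Proof.
rewrite -sum1_card big_mkcond /=; apply: eq_bigr => i _.
by rewrite inE; case: (b i).
Qed.

Lemma inDD n (c : 'I_n -> 'I_n -> nat) m x : (x \in DD c m) = [forall y, c y x < m].
Proof. by rewrite inE. Qed.

Lemma DD_ext n (c c' : 'I_n -> 'I_n -> nat) m :
  (forall y x, c y x = c' y x) -> DD c m = DD c' m.
Proof. move=> E; apply/setP=> x; rewrite !inE; apply: eq_forallb => y; by rewrite E. Qed.

Lemma MU_ext h n (c c' : 'I_n -> 'I_n -> nat) :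
  (forall y x, c y x = c' y x) -> MU h c = MU h c'.
Proof. move=> E; rewrite /MU; congr head; apply: eq_filter => m; by rewrite (DD_ext m E). Qed.

Lemma Dmu_DD h n (p : profile h n) m : Dmu m p = DD (C p) m.
Proof. apply/setP=> x; rewrite !inE; apply: eq_forallb => y; by rewrite card_setb. Qed.

Lemma C_rev h n (p : profile h n) y x : C (prof_rev p) y x = C p x y.
Proof. apply: eq_bigr => i _; by rewrite /above /prof_rev eq_sym. Qed.

Lemma Dmu_rev h n (p : profile h n) m : Dmu m (prof_rev p) = DD (tr (C p)) m.
Proof. rewrite Dmu_DD; apply: DD_ext => y x; exact: C_rev. Qed.

Lemma mu_MU h n (p : profile h n) : mu p = MU h (C p).
Proof. rewrite /mu /MU; congr head; apply: eq_filter => m; by rewrite Dmu_DD. Qed.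

Lemma mu_rev h n (p : profile h n) : mu (prof_rev p) = MU h (tr (C p)).
Proof. rewrite /mu /MU; congr head; apply: eq_filter => m; by rewrite Dmu_rev. Qed.

Lemma Good_iff h n (p : profile h n) x :
  (Dmu (mu p) p = [set x] /\ x \in Dmu (mu (prof_rev p)) (prof_rev p)) <-> GoodC h (C p) x.
Proof. by rewrite /GoodC mu_MU mu_rev Dmu_DD Dmu_rev. Qed.

Lemma head_filter_iota (f : pred nat) d a l :
  (forall m, a <= m -> m < head d (filter f (iota a l)) -> m < a + l -> ~~ f m) /\
  ((a <= head d (filter f (iota a l)) < a + l /\ f (head d (filter f (iota a l)))) \/ head d (filter f (iota a l)) = d).
Proof.
elim: l a => [|l IH] a /=; first by split=> [m|]; [lia | right].
case fa: (f a) => /=.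
  split=> [m|]; [lia | left; split; [lia|exact: fa]].
have [IH1 IH2] := IH a.+1.
split=> [m am mr ml|].
  have [->|ne] := eqVneq m a; first by rewrite fa.
  apply: IH1 => //; lia.
case: IH2 => [[H1 H2]|->]; [left; split; [lia|exact: H2] | by right].
Qed.

Lemma half_spec h : h = h./2 + h./2 \/ h = (h./2 + h./2).+1.
Proof. have := odd_double_half h; rewrite -addnn; case: (odd h) => /= E; lia. Qed.

Lemma MU_bounds h n (c : 'I_n -> 'I_n -> nat) : 0 < h -> h./2 < MU h c <= h.
Proof.
move=> h0; have [_ H] := head_filter_iota (fun m => DD c m != set0) h h./2.+1 (h - h./2).
rewrite /MU; have := half_spec h; case: H => [[H _]|->]; lia.
Qed.

Lemma MU_min h n (c : 'I_n -> 'I_n -> nat) m : 0 < h -> h./2 < m < MU h c -> DD c m = set0.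
Proof.
move=> h0 hm; have [H _] := head_filter_iota (fun m => DD c m != set0) h h./2.+1 (h - h./2).
have hb := MU_bounds c h0.
have := H m; rewrite -/(MU h c) => H'; apply/eqP; rewrite -[_ == _]negbK; apply: H'; lia.
Qed.

Lemma MU_unique h n (c : 'I_n -> 'I_n -> nat) m : 0 < h -> h./2 < m <= h -> DD c m != set0 ->
  (forall m', h./2 < m' < m -> DD c m' = set0) -> MU h c = m.
Proof.
move=> h0 hm ne mn.
have [H1 H2] := head_filter_iota (fun m => DD c m != set0) h h./2.+1 (h - h./2).
rewrite -/(MU h c) in H1 H2.
have := half_spec h => hs.
case: (ltngtP (MU h c) m) => // E.
- case: H2 => [[_ F]|F]; last lia.
  by move: F; rewrite mn ?eqxx //; have := MU_bounds c h0; lia.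
- by move: (H1 m (ltac:(lia)) E (ltac:(lia))); rewrite ne.
Qed.

Lemma DD_in n (c : 'I_n -> 'I_n -> nat) m x : x \in DD c m -> forall y, c y x < m.
Proof. by rewrite inDD => /forallP. Qed.

Lemma DD_out n (c : 'I_n -> 'I_n -> nat) m z : z \notin DD c m -> exists y, m <= c y z.
Proof. rewrite inDD negb_forall => /existsP [y]; rewrite -leqNgt; by exists y. Qed.

Lemma good_facts h n (c : 'I_n -> 'I_n -> nat) x : 0 < h -> GoodC h c x ->
 [/\ forall y, c y x < MU h c, forall z, z != x -> exists y, MU h c <= c y z,
     forall y, c x y < MU h (tr c),
     forall m, h./2 < m < MU h c -> forall z, exists y, m <= c y z &
     forall m, h./2 < m < MU h (tr c) -> forall z, exists y, m <= c z y].
Proof.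
move=> h0 [E1 E2]; split.
- apply: DD_in; by rewrite E1 set11.
- move=> z zx; apply: DD_out; by rewrite E1 in_set1.
- exact: (DD_in E2).
- move=> m hm z; apply: DD_out; by rewrite (MU_min h0 hm) in_set0.
- move=> m hm z; have := @DD_out _ (tr c) m z; apply; by rewrite (MU_min h0 hm) in_set0.
Qed.

Lemma sum_const1 h : \sum_(i < h) 1 = h.
Proof. by rewrite sum1_card card_ord. Qed.

Lemma C_diag h n (p : profile h n) x : C p x x = 0.
Proof. apply: big1 => i _; by rewrite /above eqxx. Qed.

Lemma C_compl h n (p : profile h n) y x : (forall i, linear_order (p i)) ->
  y != x -> C p y x + C p x y = h.
Proof.
move=> lin yx; rewrite /C -big_split /= -[RHS]sum_const1; apply: eq_bigr => i _.
have [_ anti _ tot] := lin i; have xy : x != y by rewrite eq_sym.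
rewrite /above yx xy.
case E1: (p i y x); case E2: (p i x y) => //=.
- by move: yx; rewrite (anti y x) ?E1 ?E2 ?eqxx.
- by move: (tot y x); rewrite E1 E2.
Qed.

Lemma C_tri h n (p : profile h n) a b d : (forall i, linear_order (p i)) ->
  C p a b + C p b d + C p d a <= 2 * h.
Proof.
move=> lin; rewrite /C -!big_split /=.
apply: (@leq_trans (\sum_(i < h) 2)); last by rewrite sum_nat_const card_ord mulnC.
apply: leq_sum => i _; have [_ anti trans _] := lin i; rewrite /above.
case E1: (a != b); case E2: (p i a b); case E3: (b != d); case E4: (p i b d);
case E5: (d != a); case E6: (p i d a) => //=.
have := anti a d; rewrite (trans _ _ _ E2 E4) E6 => /(_ isT) ad; by move: E5; rewrite ad eqxx.
Qed.

Lemma sum_all h (b : 'I_h -> bool) : h <= \sum_(i < h) b i -> forall i, b i.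
Proof.
move=> H i; apply/negPn/negP => nb.
rewrite -card_setb in H.
have : [set j | b j] \subset [set~ i].
  apply/subsetP => j; rewrite !inE; apply: contraTneq => ->; exact: nb.
move/subset_leq_card; rewrite cardsC1 card_ord.
case: h b i nb H => [|h] b i; first by case: i.
move=> _ H; by rewrite leqNgt H.
Qed.

Lemma lin_top n (r : rel 'I_n) : linear_order r -> 0 < n -> exists t, forall y, r t y.
Proof.
case: n r => // n r [refl anti trans tot] _.
exists [arg max_(t > ord0) #|[set y | r t y]|].
case: arg_maxnP => // t0 _ Hmax y.
apply/negPn/negP => nty.
have ryt : r y t0 by move: (tot t0 y); rewrite (negbTE nty).
have : [set z | r t0 z] \proper [set z | r y z].
  apply/properP; split.
    apply/subsetP => z; rewrite !inE => ?; exact: trans ryt _.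
  by exists y; rewrite !inE ?refl.
move/proper_card; have := Hmax y isT; lia.
Qed.

Lemma exists_other n (x : 'I_n) : 1 < n -> exists y, y != x.
Proof.
case: n x => [|[|n]] x // _.
case E: (x == ord0).
  exists ord_max; by move/eqP: E => ->.
by exists ord0; rewrite eq_sym E.
Qed.

Lemma mu_lt_h h n (p : profile h n) x : (forall i, linear_order (p i)) -> 1 < n -> 0 < h ->
  GoodC h (C p) x -> MU h (C p) < h.
Proof.
move=> lin n1 h0 G; have [G1 G2 G3 _ _] := good_facts h0 G.
have hb1 := MU_bounds (C p) h0; have hb2 := MU_bounds (tr (C p)) h0.
rewrite ltn_neqAle; case/andP: hb1 => _ ->; rewrite andbT; apply/eqP => E.
have top : forall i, forall y, p i x y.
  move=> i; have [t Ht] := lin_top (lin i) (ltnW n1).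
  case: (eqVneq t x) => [<- //|tx].
  have [y Hy] := G2 t tx; rewrite E in Hy.
  have := sum_all Hy i; rewrite /above => /andP [yt pyt].
  have [_ anti _ _] := lin i.
  by move: yt; rewrite (anti y t) ?pyt ?Ht ?eqxx.
have [y yx] := exists_other x n1.
have := G3 y.
have -> : C p x y = h.
  rewrite /C -[RHS]sum_const1; apply: eq_bigr => i _; by rewrite /above eq_sym yx top.
lia.
Qed.

Lemma other2 n (x a : 'I_n) : 2 < n -> exists b, b != x /\ b != a.
Proof.
move=> n2; have : ~~ ([set: 'I_n] \subset [set x; a]).
  apply/negP => /subset_leq_card; rewrite cardsT card_ord cards2; lia.
case/subsetPn => b _; rewrite !inE => /norP [bx ba]; by exists b.
Qed.

Lemma other3 n (x a b : 'I_n) : 3 < n -> exists d, [/\ d != x, d != a & d != b].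
Proof.
move=> n3; have : ~~ ([set: 'I_n] \subset [set x; a; b]).
  apply/negP => /subset_leq_card; rewrite cardsT card_ord.
  move=> H; have := leq_card_setU [set x; a] [set b]; rewrite cards1 cards2.
  move=> H2; have := leq_trans H H2; case: (a != x) => /=; lia.
case/subsetPn => d _; rewrite !inE => H; exists d.
by split; apply: contraNneq H => ->; rewrite eqxx ?orbT.
Qed.

Lemma cover2 (x a z : 'I_2) : a != x -> z = x \/ z = a.
Proof.
case: (eqVneq z x) => [->|zx]; first by left.
case: (eqVneq z a) => [->|za]; first by right.
move: zx za; rewrite -!val_eqE /=; have := ltn_ord x; have := ltn_ord a; have := ltn_ord z; lia.
Qed.

Lemma cover3 (x a b z : 'I_3) : a != x -> b != x -> a != b -> z = x \/ z = a \/ z = b.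
Proof.
case: (eqVneq z x) => [->|zx]; first by left.
case: (eqVneq z a) => [->|za]; first by right; left.
case: (eqVneq z b) => [->|zb]; first by right; right.
move: zx za zb; rewrite -!val_eqE /=; have := ltn_ord x; have := ltn_ord a; have := ltn_ord z;
have := ltn_ord b; lia.
Qed.

Lemma cover4 (x a b d z : 'I_4) : a != x -> b != x -> a != b -> d != x -> d != a -> d != b ->
  z = x \/ z = a \/ z = b \/ z = d.
Proof.
case: (eqVneq z x) => [->|zx]; first by left.
case: (eqVneq z a) => [->|za]; first by right; left.
case: (eqVneq z b) => [->|zb]; first by right; right; left.
case: (eqVneq z d) => [->|zd]; first by right; right; right.
move: zx za zb zd; rewrite -!val_eqE /=; have := ltn_ord x; have := ltn_ord a; have := ltn_ord z;
have := ltn_ord b; have := ltn_ord d; lia.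
Qed.

Lemma ex2 (P : 'I_2 -> Prop) x a : a != x -> (exists y, P y) -> P x \/ P a.
Proof. move=> ax [y Py]; by case: (cover2 y ax) => E; rewrite E in Py; [left|right]. Qed.

Lemma ex3 (P : 'I_3 -> Prop) x a b : a != x -> b != x -> a != b -> (exists y, P y) -> P x \/ P a \/ P b.
Proof. move=> ax bx ab [y Py]; by case: (cover3 y ax bx ab) => [|[|]] E; rewrite E in Py; tauto. Qed.

Lemma ex4 (P : 'I_4 -> Prop) x a b d : a != x -> b != x -> a != b -> d != x -> d != a -> d != b ->
  (exists y, P y) -> P x \/ P a \/ P b \/ P d.
Proof. move=> H1 H2 H3 H4 H5 H6 [y Py]; by case: (cover4 y H1 H2 H3 H4 H5 H6) => [|[|[|]]] E; rewrite E in Py; tauto. Qed.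

Section Imp.
Variable h : nat.

Lemma imp2 (c : 'I_2 -> 'I_2 -> nat) x : 0 < h -> (forall z, c z z = 0) ->
  (forall y z, y != z -> c y z + c z y = h) -> GoodC h c x -> False.
Proof.
move=> h0 Hd Hc G; have [G1 G2 G3 G4 G5] := good_facts h0 G.
have [a ax] := exists_other x (isT : 1 < 2).
have := half_spec h; have := MU_bounds c h0; have := MU_bounds (tr c) h0.
have := G1 a; have := G3 a; have := Hc _ _ ax; have := Hd a; have := Hd x.
have := ex2 ax (G2 a ax).
have F5 : h./2.+1 < MU h (tr c) -> MU h (tr c) - 1 <= c a x \/ MU h (tr c) - 1 <= c a a.
  move=> H; apply: (ex2 ax (G5 _ _ a)); lia.
move: F5; lia.
Qed.
End Imp.

Lemma drop1 (A B C : Prop) : ~ A -> A \/ B \/ C -> B \/ C. Proof. tauto. Qed.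
Lemma drop2 (A B C : Prop) : ~ B -> A \/ B \/ C -> A \/ C. Proof. tauto. Qed.
Lemma drop3 (A B C : Prop) : ~ C -> A \/ B \/ C -> A \/ B. Proof. tauto. Qed.

Lemma imp3 h (c : 'I_3 -> 'I_3 -> nat) x : 0 < h -> (forall z, c z z = 0) ->
  (forall y z, y != z -> c y z + c z y = h) ->
  (forall a b d, c a b + c b d + c d a <= 2 * h) -> MU h c < h -> GoodC h c x -> False.
Proof.
move=> h0 Hd Hc Ht Hlt G; have [G1 G2 G3 G4 G5] := good_facts h0 G.
have [a ax] := exists_other x (isT : 1 < 3).
have [b [bx ba]] := other2 x a (isT : 2 < 3).
have ab : a != b by rewrite eq_sym.
have B1 := MU_bounds c h0; have B2 := MU_bounds (tr c) h0.
have F2a : MU h c <= c x a \/ MU h c <= c b a.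
  apply: drop2 (ex3 ax bx ab (G2 a ax)); rewrite Hd; lia.
have F2b : MU h c <= c x b \/ MU h c <= c a b.
  apply: drop3 (ex3 ax bx ab (G2 b bx)); rewrite Hd; lia.
have F4 : h./2.+1 < MU h c ->
  (MU h c <= (c a x).+1 \/ MU h c <= (c b x).+1) /\
      (MU h c <= (c x a).+1 \/ MU h c <= (c b a).+1) /\
      (MU h c <= (c x b).+1 \/ MU h c <= (c a b).+1).
  move=> H; have HH : forall z, exists y, MU h c <= (c y z).+1.
    move=> z; have [y Hy] := G4 (MU h c).-1 (ltac:(lia)) z; exists y; lia.
  split; [|split].
  - apply: drop1 (ex3 (P := fun y => MU h c <= (c y x).+1) ax bx ab (HH x)); rewrite Hd; lia.
  - apply: drop2 (ex3 (P := fun y => MU h c <= (c y a).+1) ax bx ab (HH a)); rewrite Hd; lia.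
  - apply: drop3 (ex3 (P := fun y => MU h c <= (c y b).+1) ax bx ab (HH b)); rewrite Hd; lia.
have F5 : h./2.+1 < MU h (tr c) ->
  (MU h (tr c) <= (c x a).+1 \/ MU h (tr c) <= (c x b).+1) /\
      (MU h (tr c) <= (c a x).+1 \/ MU h (tr c) <= (c a b).+1) /\
      (MU h (tr c) <= (c b x).+1 \/ MU h (tr c) <= (c b a).+1).
  move=> H; have HH : forall z, exists y, MU h (tr c) <= (c z y).+1.
    move=> z; have [y Hy] := G5 (MU h (tr c)).-1 (ltac:(lia)) z; exists y; lia.
  split; [|split].
  - apply: drop1 (ex3 (P := fun y => MU h (tr c) <= (c x y).+1) ax bx ab (HH x)); rewrite Hd; lia.
  - apply: drop2 (ex3 (P := fun y => MU h (tr c) <= (c a y).+1) ax bx ab (HH a)); rewrite Hd; lia.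
  - apply: drop3 (ex3 (P := fun y => MU h (tr c) <= (c b y).+1) ax bx ab (HH b)); rewrite Hd; lia.
have := half_spec h.
have := G1 a; have := G1 b; have := G3 a; have := G3 b.
have := Hc _ _ ax; have := Hc _ _ bx; have := Hc _ _ ab.
have := Ht a b x; have := Ht b a x.
clear G1 G2 G3 G4 G5 G Hd Hc Ht.
move: F2a F2b F4 F5 Hlt B1 B2.
generalize (MU h c) (MU h (tr c)) (c a x) (c x a) (c b x) (c x b) (c a b) (c b a) h./2.
intros; lia.
Qed.

Lemma d42 (A B C D : Prop) : ~ B -> A \/ B \/ C \/ D -> A \/ C \/ D. Proof. tauto. Qed.
Lemma d43 (A B C D : Prop) : ~ C -> A \/ B \/ C \/ D -> A \/ B \/ D. Proof. tauto. Qed.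
Lemma d44 (A B C D : Prop) : ~ D -> A \/ B \/ C \/ D -> A \/ B \/ C. Proof. tauto. Qed.

Lemma imp44 (c : 'I_4 -> 'I_4 -> nat) x : (forall z, c z z = 0) ->
  (forall y z, y != z -> c y z + c z y = 4) ->
  (forall a b d, c a b + c b d + c d a <= 2 * 4) -> MU 4 c < 4 -> GoodC 4 c x -> False.
Proof.
move=> Hd Hc Ht Hlt G; have [G1 G2 G3 G4 G5] := good_facts (isT : 0 < 4) G.
have [a ax] := exists_other x (isT : 1 < 4).
have [b [bx ba]] := other2 x a (isT : 2 < 4).
have ab : a != b by rewrite eq_sym.
have [d [dx da db]] := other3 x a b (isT : 3 < 4).
have B1 : 2 < MU 4 c <= 4 := @MU_bounds 4 _ c isT.
have B2 : 2 < MU 4 (tr c) <= 4 := @MU_bounds 4 _ (tr c) isT.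
have E4 := ex4 ax bx ab dx da db.
have F2a : MU 4 c <= c x a \/ MU 4 c <= c b a \/ MU 4 c <= c d a.
  apply: d42 (E4 _ (G2 a ax)); rewrite Hd; lia.
have F2b : MU 4 c <= c x b \/ MU 4 c <= c a b \/ MU 4 c <= c d b.
  apply: d43 (E4 _ (G2 b bx)); rewrite Hd; lia.
have F2d : MU 4 c <= c x d \/ MU 4 c <= c a d \/ MU 4 c <= c b d.
  apply: d44 (E4 _ (G2 d dx)); rewrite Hd; lia.
have F5 : 3 < MU 4 (tr c) ->
  (3 <= c a x \/ 3 <= c a b \/ 3 <= c a d) /\
  (3 <= c b x \/ 3 <= c b a \/ 3 <= c b d) /\
  (3 <= c d x \/ 3 <= c d a \/ 3 <= c d b).
  move=> H; have HH : forall z, exists y, 3 <= c z y.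
    move=> z; have [y Hy] := G5 3 (ltac:(lia)) z; by exists y.
  split; [|split].
  - apply: d42 (E4 (fun y => 3 <= c a y) (HH a)); rewrite Hd; lia.
  - apply: d43 (E4 (fun y => 3 <= c b y) (HH b)); rewrite Hd; lia.
  - apply: d44 (E4 (fun y => 3 <= c d y) (HH d)); rewrite Hd; lia.
have := G1 a; have := G1 b; have := G1 d; have := G3 a; have := G3 b; have := G3 d.
have := Hc _ _ ax; have := Hc _ _ bx; have := Hc _ _ dx; have := Hc _ _ ab; have := Hc _ _ da; have := Hc _ _ db.
have := Ht a b d; have := Ht a d b.
clear G1 G2 G3 G4 G5 G Hd Hc Ht E4.
move: F2a F2b F2d F5 Hlt B1 B2.
generalize (MU 4 c) (MU 4 (tr c)) (c a x) (c x a) (c b x) (c x b) (c d x) (c x d) (c a b) (c b a)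
  (c a d) (c d a) (c b d) (c d b).
move=> m1 m2 ax' xa bx' xb dx' xd ab' ba' ad da' bd db' F2a F2b F2d F5 Hlt B1 B2.
have E1 : m1 = 3 by lia. subst m1.
move=> T1 T2 C1 C2 C3 C4 C5 C6 K1 K2 K3 K4 K5 K6.
have [E2|E2] : m2 = 3 \/ m2 = 4 by lia.
- subst m2; clear F5; lia.
- subst m2; case: F5 => // H1 [H2 H3]; clear F2a F2b F2d; lia.
Qed.

Definition inj_lt n (f : nat -> nat) := forall a b, a < n -> b < n -> f a = f b -> a = b.
Definition rprof h n (F : nat -> nat -> nat) : profile h n := fun i a b => F i b <= F i a.
Definition Inv h n := exists (F : nat -> nat -> nat) (x : 'I_n), (forall i, inj_lt n (F i)) /\ GoodC h (C (@rprof h n F)) x.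

Lemma rk_linear n (f : nat -> nat) : inj_lt n f -> linear_order (fun a b : 'I_n => f b <= f a).
Proof.
move=> inj; split.
- move=> a; exact: leqnn.
- move=> a b /andP [H1 H2]; apply: val_inj; apply: inj; rewrite ?ltn_ord //; apply/eqP; by rewrite eqn_leq H1 H2.
- move=> a b d H1 H2; exact: leq_trans H2 H1.
- move=> a b; exact: leq_total.
Qed.

Lemma DD_pair n (c c' : 'I_n -> 'I_n -> nat) m : (forall y z, c' y z = c y z + (y != z)) ->
  (forall z, c z z = 0) -> 0 < m -> DD c' m.+1 = DD c m.
Proof.
move=> E Hd m0; apply/setP=> x; rewrite !inDD; apply: eq_forallb => y.
rewrite E; case: (eqVneq y x) => [->|_]; rewrite ?Hd /=; lia.
Qed.

Lemma MU_pair h n (c c' : 'I_n -> 'I_n -> nat) : (forall y z, c' y z = c y z + (y != z)) ->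
  (forall z, c z z = 0) -> 0 < h -> DD c (MU h c) != set0 -> MU h.+2 c' = (MU h c).+1.
Proof.
move=> E Hd h0 ne; have B := MU_bounds c h0.
apply: MU_unique => //=.
- lia.
- by rewrite (DD_pair E Hd) //; lia.
- move=> [|m'] Hm; first lia.
  rewrite (DD_pair E Hd); last lia.
  apply: (@MU_min h _ c m' h0); lia.
Qed.

Lemma good_pair h n (c c' : 'I_n -> 'I_n -> nat) x : (forall y z, c' y z = c y z + (y != z)) ->
  (forall z, c z z = 0) -> 0 < h -> GoodC h c x -> GoodC h.+2 c' x.
Proof.
move=> E Hd h0 [G1 G2].
have Et : forall y z, tr c' y z = tr c y z + (y != z) by move=> y z; rewrite /tr E eq_sym.
have Hdt : forall z, tr c z z = 0 by move=> z; exact: Hd.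
have ne1 : DD c (MU h c) != set0 by rewrite G1; apply/set0Pn; exists x; rewrite set11.
have ne2 : DD (tr c) (MU h (tr c)) != set0 by apply/set0Pn; exists x.
split.
- rewrite (MU_pair E Hd h0 ne1) (DD_pair E Hd) //; have := MU_bounds c h0; lia.
- rewrite (MU_pair Et Hdt h0 ne2) (DD_pair Et Hdt) //; have := MU_bounds (tr c) h0; lia.
Qed.

Definition Fpair n (F : nat -> nat -> nat) := fun i =>
  match i with 0 => (fun a : nat => a) | 1 => (fun a => n - a) | k.+2 => F k end.

Lemma C_pair h n F (y z : 'I_n) :
  C (@rprof h.+2 n (Fpair n F)) y z = C (@rprof h n F) y z + (y != z).
Proof.
rewrite /C !big_ord_recl [LHS]addnA [LHS]addnC; congr (_ + _).
rewrite /rprof /above /=; case: (eqVneq y z) => //= yz; move: yz; rewrite -val_eqE /= => yz.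
have := ltn_ord y; have := ltn_ord z.
case: (leqP z y) => H1; case: (leqP (n - z) (n - y)) => H2 //=; lia.
Qed.

Lemma Inv_pair h n : 0 < h -> Inv h n -> Inv h.+2 n.
Proof.
move=> h0 [F [x [inj G]]]; exists (Fpair n F), x; split.
- case=> [|[|i]] /=; last exact: inj.
  + by move=> a b.
  + move=> a b; lia.
- apply: (good_pair (c := C (@rprof h n F))) => //.
  + exact: C_pair.
  + move=> z; exact: C_diag.
Qed.

Lemma forall_split n (P : pred 'I_n.+1) :
  [forall y, P y] = P ord0 && [forall b, P (lift ord0 b)].
Proof.
apply/forallP/andP => [H|[H0 /forallP Hl] y]; first by split; [|apply/forallP => b]; apply: H.
by case: (unliftP ord0 y) => [b ->|->].
Qed.

Lemma MU_eq h n n' (c : 'I_n -> 'I_n -> nat) (c' : 'I_n' -> 'I_n' -> nat) : 0 < h ->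
  (forall m, 0 < m <= h -> (DD c' m != set0) = (DD c m != set0)) ->
  DD c (MU h c) != set0 -> MU h c' = MU h c.
Proof.
move=> h0 E ne; have B := MU_bounds c h0.
apply: MU_unique => //.
- rewrite E //; lia.
- move=> m' Hm; apply/eqP; rewrite -[_ == _]negbK E; last lia.
  by rewrite (@MU_min h _ c m' h0) ?eqxx.
Qed.

Section Clone.
Variables (h n : nat) (c : 'I_n -> 'I_n -> nat) (c' : 'I_n.+1 -> 'I_n.+1 -> nat) (y0 : 'I_n).
Hypothesis h0 : 0 < h.
Hypothesis Hd : forall z, c z z = 0.
Hypothesis R1 : forall a b : 'I_n, c' (lift ord0 a) (lift ord0 b) = c a b.
Hypothesis R2 : forall b : 'I_n, c' ord0 (lift ord0 b) = c y0 b.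
Hypothesis R3 : forall a : 'I_n, c' (lift ord0 a) ord0 = c a y0 + (a == y0) * h.
Hypothesis R4 : c' ord0 ord0 = 0.

Lemma M1 m a : (lift ord0 a \in DD c' m) = (a \in DD c m).
Proof.
rewrite !inDD forall_split R2; under eq_forallb => b do rewrite R1.
case X: [forall b, c b a < m]; last by rewrite andbF.
by rewrite andbT (forallP X).
Qed.

Lemma M2 m : m <= h -> ord0 \notin DD c' m.
Proof.
move=> mh; rewrite inDD forall_split; apply/negP => /andP [_ /forallP /(_ y0)].
rewrite R3 Hd eqxx mul1n; lia.
Qed.

Lemma M3 m a : m <= h -> (lift ord0 a \in DD (tr c') m) = (a != y0) && (a \in DD (tr c) m).
Proof.
move=> mh; rewrite !inDD forall_split /tr R3; under eq_forallb => b do rewrite R1.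
case: (eqVneq a y0) => [->|ay] /=; first by rewrite Hd mul1n add0n ltnNge mh.
rewrite mul0n addn0.
case X: [forall b, c a b < m]; last by rewrite andbF.
by rewrite andbT (forallP X).
Qed.

Lemma M4 m : 0 < m -> (ord0 \in DD (tr c') m) = (y0 \in DD (tr c) m).
Proof.
move=> m0; rewrite !inDD forall_split /tr R4 m0 /=; apply: eq_forallb => b; by rewrite R2.
Qed.

Lemma NE1 m : m <= h -> (DD c' m != set0) = (DD c m != set0).
Proof.
move=> mh; apply/set0Pn/set0Pn => [[z]|[a Ha]].
  by case: (unliftP ord0 z) => [a ->|->]; [rewrite M1; exists a | rewrite (negbTE (M2 mh))].
by exists (lift ord0 a); rewrite M1.
Qed.

Lemma NE2 m : 0 < m <= h -> (DD (tr c') m != set0) = (DD (tr c) m != set0).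
Proof.
case/andP=> m0 mh; apply/set0Pn/set0Pn => [[z]|[a Ha]].
  case: (unliftP ord0 z) => [a ->|->]; [rewrite M3 // => /andP [_ H] | rewrite M4 // => H];
  by eexists; exact: H.
case: (eqVneq a y0) => [E|ay].
  by exists ord0; rewrite M4 // -E.
by exists (lift ord0 a); rewrite M3 // ay.
Qed.

Lemma clone_good x : y0 != x -> GoodC h c x -> GoodC h c' (lift ord0 x).
Proof.
move=> yx [G1 G2].
have ne1 : DD c (MU h c) != set0 by rewrite G1; apply/set0Pn; exists x; rewrite set11.
have ne2 : DD (tr c) (MU h (tr c)) != set0 by apply/set0Pn; exists x.
have E1 : MU h c' = MU h c by apply: MU_eq => // m /andP [_ ?]; exact: NE1.
have E2 : MU h (tr c') = MU h (tr c) by apply: MU_eq => // m Hm; exact: NE2.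
have B1 := MU_bounds c h0; have B2 := MU_bounds (tr c) h0.
split.
- rewrite E1; apply/setP => z; rewrite in_set1.
  case: (unliftP ord0 z) => [a ->|->].
    by rewrite M1 G1 in_set1 (inj_eq (@lift_inj _ ord0)).
  rewrite (negbTE (M2 _)); last lia.
  by rewrite (negbTE (neq_lift _ _)).
- rewrite E2 M3; last lia.
  by rewrite eq_sym yx.
Qed.
End Clone.

Definition Fclone (F : nat -> nat -> nat) (y0 : nat) := fun i a =>
  if a is a'.+1 then 2 * F i a' + 1 else 2 * F i y0.

Lemma Inv_clone h n : 0 < h -> 1 < n -> Inv h n -> Inv h n.+1.
Proof.
move=> h0 n1 [F [x [inj G]]].
have [y0 yx] := exists_other x n1.
exists (Fclone F y0), (lift ord0 x); split.
  move=> i [|a] [|b] //= ha hb; try lia.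
  move=> E; congr S; apply: (inj i) => //; lia.
have neq : forall i (a : 'I_n), a != y0 -> F i a != F i y0.
  move=> i a ay; apply: contraNneq ay => E; apply/eqP; exact: val_inj (inj i _ _ (ltn_ord a) (ltn_ord y0) E).
apply: (clone_good (c := C (@rprof h n F)) (y0 := y0)) => //.
- move=> z; exact: C_diag.
- move=> a b; apply: eq_bigr => i _.
  rewrite /above /rprof !lift0 /= (inj_eq (@lift_inj _ ord0)).
  congr (_ && _); apply/idP/idP => H; lia.
- move=> b; apply: eq_bigr => i _.
  rewrite /above /rprof !lift0 /=.
  case: (eqVneq y0 b) => [<-|yb] /=; first lia.
  have := neq i b; rewrite eq_sym yb => /(_ isT) /eqP H.
  by case: (leqP (F i b) (F i y0)) => H1; case: leqP => H2 //; lia.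
- move=> a; rewrite /C.
  have -> : \sum_(i < h) above (@rprof h n.+1 (Fclone F y0) i) (lift ord0 a) ord0 =
            \sum_(i < h) (above (@rprof h n F i) a y0 + (a == y0)).
    apply: eq_bigr => i _.
    rewrite /above /rprof !lift0 /=.
    case: (eqVneq a y0) => [->|ay] /=; first by rewrite leq_addr.
    have /eqP H := neq i a ay.
    rewrite addn0; congr nat_of_bool; apply/idP/idP => H'; lia.
  by rewrite big_split /= sum_nat_const card_ord mulnC.
- exact: C_diag.
Qed.

Definition injb n (f : nat -> nat) :=
  all (fun a => all (fun b => (f a == f b) ==> (a == b)) (iota 0 n)) (iota 0 n).

Lemma injbP n f : injb n f -> inj_lt n f.
Proof.
move=> /allP H a b an bn E.
have := H a; rewrite mem_iota /= => /(_ an) /allP /(_ b); rewrite mem_iota /= => /(_ bn).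
by rewrite E eqxx /= => /eqP.
Qed.

Definition tab n (T : seq (seq nat)) := fun i a => nth 0 (nth (iota 0 n) T i) a.

Lemma inj_tab n T : all (fun r => injb n (fun a => nth 0 r a)) T -> forall i, inj_lt n (tab n T i).
Proof.
move=> /allP H i; rewrite /tab; case: (ltnP i (size T)) => Hi.
  by apply: injbP; apply: H; rewrite mem_nth.
rewrite nth_default // => a b an bn; rewrite !nth_iota //.
Qed.

Definition T34 := [:: [:: 3; 2; 1; 0]; [:: 3; 0; 2; 1]; [:: 0; 2; 1; 3]].
Definition T45 := [:: [:: 4; 3; 2; 1; 0]; [:: 4; 0; 3; 2; 1]; [:: 4; 1; 0; 3; 2]; [:: 0; 3; 2; 1; 4]].
Definition T64 := [:: [:: 3; 2; 1; 0]; [:: 3; 2; 1; 0]; [:: 3; 0; 2; 1]; [:: 3; 0; 2; 1]; [:: 0; 2; 1; 3]; [:: 0; 2; 1; 3]].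

Lemma forall_I0 (P : pred 'I_0) : [forall y, P y] = true.
Proof. by apply/forallP => -[]. Qed.

Lemma DD_empty n (c : 'I_n -> 'I_n -> nat) m : [forall z, ~~ [forall y, c y z < m]] -> DD c m = set0.
Proof.
move=> /forallP H; apply/setP => z; rewrite inDD in_set0; exact: negbTE (H z).
Qed.

Lemma base_check h n (c : 'I_n -> 'I_n -> nat) x m1 m2 : 0 < h -> h./2 < m1 <= h -> h./2 < m2 <= h ->
  (forall m', h./2 < m' < m1 -> DD c m' = set0) ->
  (forall m', h./2 < m' < m2 -> DD (tr c) m' = set0) ->
  [forall z, [forall y, c y z < m1] == (z == x)] -> [forall y, c x y < m2] -> GoodC h c x.
Proof.
move=> h0 B1 B2 M1 M2 /forallP H1 H2.
have D1 : DD c m1 = [set x].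
  apply/setP => z; rewrite inDD in_set1; by move/eqP: (H1 z).
have D2 : x \in DD (tr c) m2 by rewrite inDD.
have ne1 : DD c m1 != set0 by rewrite D1; apply/set0Pn; exists x; rewrite set11.
have ne2 : DD (tr c) m2 != set0 by apply/set0Pn; exists x.
by split; [rewrite (MU_unique h0 B1 ne1 M1) | rewrite (MU_unique h0 B2 ne2 M2)].
Qed.

Ltac crunch := rewrite ?inDD !forall_split ?forall_I0 /tr /C !big_ord_recr ?big_ord0; vm_compute; reflexivity.

Lemma base34 : Inv 3 4.
Proof.
exists (tab 4 T34), ord0; split; first exact: inj_tab.
apply: (@base_check 3 4 _ ord0 2 3) => //.
- move=> m'; lia.
- move=> m' Hm; have -> : m' = 2 by lia.
  apply: DD_empty; crunch.
- crunch.
- crunch.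
Qed.

Lemma base45 : Inv 4 5.
Proof.
exists (tab 5 T45), ord0; split; first exact: inj_tab.
apply: (@base_check 4 5 _ ord0 3 4) => //.
- move=> m'; lia.
- move=> m' Hm; have -> : m' = 3 by lia.
  apply: DD_empty; crunch.
- crunch.
- crunch.
Qed.

Lemma base64 : Inv 6 4.
Proof.
exists (tab 4 T64), ord0; split; first exact: inj_tab.
apply: (@base_check 6 4 _ ord0 4 5) => //.
- move=> m'; lia.
- move=> m' Hm; have -> : m' = 4 by lia.
  apply: DD_empty; crunch.
- crunch.
- crunch.
Qed.

Lemma Inv_n h n0 : 0 < h -> 1 < n0 -> Inv h n0 -> forall n, n0 <= n -> Inv h n.
Proof.
move=> h0 n1 I n Hn.
have -> : n = n0 + (n - n0) by lia.
elim: (n - n0) => [|j IH]; first by rewrite addn0.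
rewrite addnS; apply: Inv_clone => //; lia.
Qed.

Lemma Inv_h h0 n : 0 < h0 -> Inv h0 n -> forall j, Inv (h0 + 2 * j) n.
Proof.
move=> h1 I; elim=> [|j IH]; first by rewrite muln0 addn0.
have -> : h0 + 2 * j.+1 = (h0 + 2 * j).+2 by lia.
apply: Inv_pair => //; lia.
Qed.

Lemma Inv_all h n : 3 <= h -> 4 <= n -> ~ (h = 4 /\ n = 4) -> Inv h n.
Proof.
move=> h3 n4 hn; have [E|E] := half_spec h.
- have [k2|k3] : h./2 = 2 \/ 3 <= h./2 by lia.
  + have hh : h = 4 by lia.
    subst h; apply: (Inv_n _ _ base45) => //; lia.
  + have -> : h = 6 + 2 * (h./2 - 3) by lia.
    apply: (Inv_n _ _ (Inv_h _ base64 _)) => //; lia.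
- have -> : h = 3 + 2 * (h./2 - 1) by lia.
  apply: (Inv_n _ _ (Inv_h _ base34 _)) => //; lia.
Qed.

Theorem proposition4 (n h : nat) (hn : 2 <= n) (hh : 2 <= h) :
  (exists (p : profile h n) (x : 'I_n),
      (forall i, linear_order (p i)) /\
      Dmu (mu p) p = [set x] /\
      x \in Dmu (mu (prof_rev p)) (prof_rev p))
  <-> ~ (h = 2 \/ n <= 3 \/ (h = 4 /\ n = 4)).
Proof.
split.
- move=> [p [x [lin D]]] T.
  have G : GoodC h (C p) x by apply/Good_iff.
  have h0 : 0 < h by lia.
  have Hlt := mu_lt_h lin (ltac:(lia)) h0 G.
  have Hd : forall z, C p z z = 0 by move=> z; exact: C_diag.
  have Hc : forall y z, y != z -> C p y z + C p z y = h by move=> y z; exact: C_compl.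
  have Ht : forall a b d, C p a b + C p b d + C p d a <= 2 * h by move=> a b d; exact: C_tri.
  case: T => [h2|[n3|[h4 n4]]].
  + subst h; have := MU_bounds (C p) h0; rewrite /=; lia.
  + have [n2|n3'] : n = 2 \/ n = 3 by lia.
    * subst n; exact: (imp2 h0 Hd Hc G).
    * subst n; exact: (imp3 h0 Hd Hc Ht Hlt G).
  + subst h n; exact: (imp44 Hd Hc Ht Hlt G).
- move=> T.
  have [F [x [inj G]]] : Inv h n by apply: Inv_all; lia.
  exists (@rprof h n F), x; split.
    move=> i; exact: rk_linear (inj i).
  by apply/Good_iff.
Qed.
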